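(* Let $A\in SL_d(\mathbb Z)$ be such that no eigenvalue of $A$ is a root of unity and the characteristic polynomial of $A$ is irreducible over $\mathbb Q$. Then there exists a basis $\{v_1,\dots,v_d\}$ of $\mathbb C^d$ such that (1) each $v_i$ is an eigenvector of $A$, and (2) for every $k\in\mathbb Z^d\setminus\{0\}$, if $a_1(k),\dots,a_d(k)\in\mathbb C$ are the coefficients with $k=\sum_{i=1}^d a_i(k)v_i$, then $$\prod_{i=1}^d|a_i(k)|\ge1.$$ *)

(* Defs.v *)
From HB Require Import structures.
From mathcomp Require Import all_boot all_order all_algebra.
Set Implicit Arguments. Unset Strict Implicit. Unset Printing Implicit Defensive.
Import Order.TTheory GRing.Theory Num.Theory.
Local Open Scope ring_scope.

Definition intmx (R : nzRingType) (m n : nat) (A : 'M[int]_(m, n)) : 'M[R]_(m, n) :=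
  map_mx (fun z : int => z%:~R) A.

(* Main.v *)
Require Import Defs.
From HB Require Import structures.
From mathcomp Require Import all_boot all_order all_algebra.
From mathcomp Require Import all_field zify.
Import Order.TTheory GRing.Theory Num.Theory.
Local Open Scope ring_scope.

Lemma dvd_of_root (C : numClosedFieldType) (p q : {poly rat}) (x : C) :
  irreducible_poly p -> root (map_poly ratr p) x ->
  root (map_poly ratr q) x -> p %| q.
Proof.
move=> [sp Hirr] px qx.
have g1 : size (gcdp p q) != 1%N.
  apply/negP => /size_poly1P [c c0 Hc].
  have : root (map_poly ratr (gcdp p q)) x by rewrite gcdp_map root_gcd px qx.
  by rewrite Hc map_polyC rootC fmorph_eq0 (negPf c0).
have := Hirr _ g1 (dvdp_gcdl p q).
by move=> /eqp_dvdl <-; exact: dvdp_gcdr.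
Qed.

Lemma conj_root (C : numClosedFieldType) (p q : {poly rat}) (x y : C) :
  irreducible_poly p -> root (map_poly ratr p) x -> root (map_poly ratr p) y ->
  root (map_poly ratr q) x -> root (map_poly ratr q) y.
Proof.
move=> ip px py qx; apply: root_dvdp py; rewrite dvdp_map.
exact: dvd_of_root ip px qx.
Qed.

Lemma mapZQ (C : numClosedFieldType) (q : {poly int}) :
  map_poly (intr : int -> C) q = map_poly ratr (map_poly (intr : int -> rat) q).
Proof.
rewrite -map_poly_comp; apply: eq_map_poly => z /=; by rewrite ratr_int.
Qed.

Lemma coprime_deriv (p : {poly rat}) : irreducible_poly p -> coprimep p p^`().
Proof.
move=> [sp Hirr].
have p0 : p != 0 by apply: contraTneq sp => ->; rewrite size_poly0.
have d0 : p^`() != 0.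
  apply/eqP => H; have := congr1 (fun q : {poly rat} => q`_(size p).-2) H.
  rewrite /= coef_deriv coef0.
  have -> : ((size p).-2.+1 = (size p).-1)%N by case: (size p) sp => [|[|m]].
  move/eqP; rewrite mulrn_eq0 -lead_coefE lead_coef_eq0 (negPf p0) orbF.
  by case: (size p) sp => [|[|m]].
rewrite /coprimep; apply/negPn/negP => g1.
have := Hirr _ g1 (dvdp_gcdl p p^`()).
move=> /eqp_dvdl H; have := dvdp_gcdr p p^`(); rewrite H => {}H.
by have := dvdp_leq d0 H; rewrite leqNgt lt_size_deriv.
Qed.

Theorem lemma4p4 (C : numClosedFieldType) (d : nat) (A : 'M[int]_d)
  (hdet : \det A = 1)
  (hirr : irreducible_poly (char_poly (intmx rat A)))
  (hnru : forall lam : C, eigenvalue (intmx C A) lam ->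
            forall n : nat, (0 < n)%N -> ~~ n.-unity_root lam) :
  exists V : 'M[C]_d,
    V \in unitmx /\
    (forall i : 'I_d, exists lam : C, intmx C A *m col i V = lam *: col i V) /\
    (forall k : 'cV[int]_d, k != 0 ->
       forall a : 'cV[C]_d, intmx C k = V *m a ->
         1 <= \prod_(i < d) `|a i 0|).
Proof.
case: d A hdet hirr hnru => [|n] A _ hirr _.
  by case: hirr; rewrite size_char_poly.
pose AC := intmx C A.
have ACE : AC = map_mx intr A by [].
pose pZ := char_poly A.
have pCE : char_poly AC = map_poly intr pZ by rewrite ACE map_char_poly.
have pQE : char_poly (intmx rat A) = map_poly intr pZ.
  by rewrite /intmx -map_char_poly.
pose p := map_poly (intr : int -> rat) pZ.
rewrite pQE -/p in hirr.
have pCr : char_poly AC = map_poly ratr p by rewrite pCE mapZQ.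
have [r Hr] := closed_field_poly_normal (char_poly AC).
rewrite (monicP (char_poly_monic _)) scale1r in Hr.
have sr : size r = n.+1.
  by have := size_char_poly AC; rewrite Hr size_prod_XsubC => -[].
have ur : uniq r.
  rewrite -separable_prod_XsubC -Hr pCr unlock /separable_poly deriv_map coprimep_map.
  exact: coprime_deriv.
pose lam (i : 'I_n.+1) := r`_i.
have rootl i : root (map_poly ratr p) (lam i).
  by rewrite -pCr Hr root_prod_XsubC mem_nth // sr.
have injl : injective lam.
  by move=> i j /eqP; rewrite nth_uniq ?sr // => /eqP/val_inj.
have conjZ (q : {poly int}) i j : root (map_poly intr q) (lam i) -> root (map_poly intr q) (lam j).
  by rewrite !mapZQ; apply: conj_root hirr (rootl i) (rootl j).
have [B BE] : {B : 'M[{poly int}]_n.+1 | B = \adj (char_poly_mx A)} by exists (\adj (char_poly_mx A)).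
have BCE : map_mx (map_poly intr) B = \adj (char_poly_mx AC).
  by rewrite BE map_mx_adj ACE map_char_poly_mx.
pose u (r0 : 'I_n.+1) (x : C) : 'rV[C]_n.+1 := \row_j (map_poly intr (B r0 j)).[x].
have ueig r0 i : u r0 (lam i) *m AC = lam i *: u r0 (lam i).
  set x := lam i.
  have E := mul_adj_mx (char_poly_mx AC).
  have := congr1 (map_mx (horner_eval x)) E.
  rewrite map_mxM map_scalar_mx /= horner_evalE.
  have -> : (\det (char_poly_mx AC)).[x] = 0.
    by have := rootl i; rewrite -pCr => /rootP.
  have -> : map_mx (horner_eval x) (char_poly_mx AC) = x%:M - AC.
    apply/matrixP => a b; rewrite !mxE /= horner_evalE hornerD hornerN hornerMn hornerX hornerC.
    by [].
  move=> /(congr1 (row r0)); rewrite row_mul.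
  have -> : row r0 (map_mx (horner_eval x) (\adj (char_poly_mx AC))) = u r0 x.
    by rewrite -BCE; apply/rowP => j; rewrite !mxE.
  rewrite mulmxBr mul_mx_scalar => /eqP.
  have -> : row r0 (0%:M : 'M[C]_n.+1) = 0 by apply/rowP => j; rewrite !mxE mul0rn.
  by rewrite subr_eq0 => /eqP ->.
have [i0 [j0 Hij]] : exists i0 j0, (map_poly intr (B i0 j0)).[lam ord0] != 0 :> C.
  have [/existsP [i0 /existsP [j0 H]] | Hall] :=
    boolP [exists i, exists j, (map_poly intr (B i j)).[lam ord0] != 0 :> C].
    by exists i0, j0.
  exfalso.
  have dv i j : p %| map_poly intr (B i j).
    apply: (@dvd_of_root C p _ (lam ord0) hirr (rootl ord0)); rewrite -mapZQ; apply/rootP.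
    move: Hall; rewrite negb_exists => /forallP /(_ i).
    by rewrite negb_exists => /forallP /(_ j); rewrite negbK => /eqP.
  pose AQ := intmx rat A.
  have BQE : map_mx (map_poly intr) B = \adj (char_poly_mx AQ).
    by rewrite BE map_mx_adj map_char_poly_mx.
  pose Cm := map_mx (fun q => q %/ p) (map_mx (map_poly (intr : int -> rat)) B).
  have BCm : map_mx (map_poly (intr : int -> rat)) B = p *: Cm.
    apply/matrixP => i j; have := dv i j; rewrite !mxE => dv'.
    by rewrite mulrC divpK.
    have := mul_mx_adj (char_poly_mx AQ); rewrite -BQE BCm -scalemxAr.
  rewrite -/(char_poly AQ) /AQ pQE -/p => /(congr1 determinant).
  rewrite -scalemx1 !detZ det1 mulr1 det_mulmx => H.
  have pn0 : p ^+ n.+1 != 0 by rewrite expf_neq0 // irredp_neq0.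
  have H1 := mulfI pn0 (etrans H (esym (mulr1 _))).
  rewrite -[\det (char_poly_mx _)]/(char_poly _) pQE -/p in H1.
  have : p \is a GRing.unit by apply/unitrPr; exists (\det Cm).
  by rewrite poly_unitE => /andP [/eqP s1 _]; case: hirr; rewrite s1.
pose U : 'M[C]_n.+1 := \matrix_i u i0 (lam i).
have rowU i : row i U = u i0 (lam i) by rewrite rowK.
have nzg i : (map_poly intr (B i0 j0)).[lam i] != 0 :> C.
  apply: contra Hij => /eqP H; apply/eqP/rootP.
  by apply: (conjZ _ i); apply/rootP.
have rowUnz i : row i U != 0.
  apply/eqP => /(congr1 (fun M : 'rV[C]_n.+1 => M 0 j0)); rewrite rowU !mxE.
  by move/eqP; rewrite (negPf (nzg i)).
have Uunit : U \in unitmx.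
  pose E_ i := eigenspace AC (lam i).
  have dir : mxdirect (\sum_i E_ i).
    by apply: mxdirect_sum_eigenspace => i j _ _; apply: injl.
  have rk_sum : \rank (\sum_i E_ i) = (\sum_i \rank (E_ i))%N by apply/mxdirectP.
  have subi i : (row i U <= E_ i)%MS by apply/eigenspaceP; rewrite rowU ueig.
  have rk1 i : (1 <= \rank (E_ i))%N.
    by have := mxrankS (subi i); rewrite rank_rV rowUnz.
  have le : (\sum_i \rank (E_ i) <= n.+1)%N by rewrite -rk_sum rank_leq_col.
  have rkeq i : \rank (E_ i) = 1%N.
    have : (\sum_i (\rank (E_ i) - 1) == 0)%N.
      have : (\sum_i \rank (E_ i) = \sum_i (\rank (E_ i) - 1) + \sum_(i < n.+1) 1)%N.
        by rewrite -big_split; apply: eq_bigr => k _; have := rk1 k; move=> h; rewrite /= subnK.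
      rewrite sum1_card card_ord => E; rewrite E in le.
      by rewrite -leqn0 -(leq_add2r n.+1).
    rewrite sum_nat_eq0 => /forallP /(_ i) /eqP.
    by have := rk1 i; lia.
  have Esub i : (E_ i <= row i U)%MS.
    by rewrite -(mxrank_leqif_sup (subi i)).2 rank_rV rowUnz rkeq.
  have sumsub : (\sum_i E_ i <= U)%MS.
    by apply/sumsmx_subP => i _; apply: submx_trans (Esub i) (row_sub i U).
  have := mxrankS sumsub; rewrite rk_sum (eq_bigr (fun _ => 1%N)) ?sum1_card ?card_ord // => H.
  by rewrite -row_full_unit /row_full eqn_leq rank_leq_col H.
pose D : 'M[C]_n.+1 := diag_mx (\row_i lam i).
have UA : U *m AC = D *m U.
  apply/row_matrixP => i; rewrite row_mul rowU ueig -rowU.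
  by rewrite mul_diag_mx; apply/rowP => j; rewrite !mxE.
pose V := invmx U.
have ACV : AC = V *m D *m U by rewrite -mulmxA -UA mulKmx.
have ACV2 : AC *m V = V *m D.
  by rewrite ACV -!mulmxA /V mulmxV // mulmx1.
exists V; split; first by rewrite unitmx_inv.
split.
  move=> i; exists (lam i); apply/colP => j.
  have := congr1 (fun M : 'M[C]_n.+1 => M j i) ACV2; rewrite mul_mx_diag !mxE => H.
  rewrite mulrC -H; apply: eq_bigr => k _; by rewrite [col _ _ _ _]mxE.
move=> k kn0 a Ha.
have aE : U *m intmx C k = a by rewrite Ha mulKVmx.
pose g : {poly int} := \sum_j B i0 j * (k j 0)%:P.
have ai i : a i 0 = (map_poly intr g).[lam i].
  rewrite -aE !mxE rmorph_sum horner_sum; apply: eq_bigr => j _.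
  by rewrite rmorphM /= map_polyC hornerM hornerC !mxE.
have an0 : a != 0.
  apply: contra kn0 => /eqP a0; apply/eqP/matrixP => i j.
  have := congr1 (fun M : 'cV[C]_n.+1 => M i j) Ha; rewrite a0 mulmx0 !mxE.
  by move/eqP; rewrite intr_eq0 => /eqP.
have [i1 ai1] : exists i1, a i1 0 != 0.
  apply/existsP; apply: contraR an0; rewrite negb_exists => /forallP H.
  apply/eqP/matrixP => i j; rewrite (ord1 j) mxE; apply/eqP.
  by have := H i; rewrite negbK.
have gnz i : (map_poly intr g).[lam i] != 0 :> C.
  apply: contra ai1 => /eqP H; rewrite ai; apply/eqP/rootP.
  by apply: (conjZ _ i); apply/rootP.
pose G := horner_mx A g.
have detG : \prod_i a i 0 = (\det G)%:~R.
  rewrite -det_map_mx /= map_horner_mx -/(intmx C A) -/AC ACV /V.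
  rewrite horner_mx_uconjC // horner_mx_diag !det_mulmx det_inv det_diag.
  rewrite mulrC mulrA mulrV -?unitmxE // mul1r.
  by apply: eq_bigr => i _; rewrite !mxE ai.
have Gn0 : \det G != 0.
  have : \prod_i a i 0 != 0 by apply/prodf_neq0 => i _; rewrite ai gnz.
  by rewrite detG; apply: contraNneq => ->; rewrite mulr0z.
rewrite -normr_prod detG -intr_norm ler1z -gtz0_ge1 normr_gt0.
exact: Gn0.
Qed.
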